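(* Let $G_n$, $m$, $g$ and $\alpha$ be as in the context. Let $(u,v)$ be an arc of $G_n$ with $u\neq m$ and $v\neq m$, and let $l(uv)$ denote its label. Then $l(uv)\leq \alpha(u)$. Moreover, if $l(uv)<\alpha(u)$ then $g(v)=\varepsilon$, and if $l(uv)=\alpha(u)$ then $g(v)=g(u)\,l(uv)$.
   Context: Let $A$ be a finite alphabet with a linear order $<$, extended to the lexicographic order on words: $x<y$ if $x$ is a proper prefix of $y$, or $x=uav$, $y=ubw$ with $a,b\in A$, $a<b$. Let $\mathcal{F}$ be a set of words over $A$ (forbidden words). A word $w$ is in the language if the bi-infinite periodic sequence $\cdots www\cdots$ contains no element of $\mathcal{F}$ as a factor; $W_k$ denotes the set of words of length $k$ in the language. Fix $n\geq 1$ and consider the digraph with vertex set $A^n$ and arcs $(as,sb)$ for $a,b\in A$, $s\in A^{n-1}$, $asb\in W_{n+1}$, the label of $(as,sb)$ being $b$. The de Bruijn graph of span $n$, $G_n$, is a strongly connected component of maximum size of this digraph; vertices are identified with their words. Let $m=m_1\cdots m_n$ be the vertex of $G_n$ whose word is lexicographically largest. For a vertex $u\neq m$, $g(u)$ is the longest word which is both a prefix of $m$ and a suffix of $u$ (possibly the empty word $\varepsilon$; necessarily $|g(u)|<n$), and $\alpha(u)=m_{|g(u)|+1}$. *)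

(* Defs.v *)
From HB Require Import structures.
From mathcomp Require Import all_boot all_order.
From Stdlib Require Import Relations.
Set Implicit Arguments. Unset Strict Implicit. Unset Printing Implicit Defensive.
Import Order.TTheory.
Local Open Scope order_scope.

Section DeBruijn.
Context {d : Order.disp_t} {T : finOrderType d}.

Fixpoint lexlt (x y : seq T) : bool :=
  match x, y with
  | [::], _ :: _ => true
  | _, [::] => false
  | a :: x', b :: y' => (a < b) || ((a == b) && lexlt x' y')
  end.

(* f is a factor of the bi-infinite periodic sequence ... w w w ...
   (for w empty this sequence is empty; only the empty word is a factor). *)
Definition occurs_periodic (f w : seq T) : Prop :=
  if w is a :: _ then
    exists i : nat, forall j, (j < size f)%N ->
      nth a f j = nth a w ((i + j) %% size w)
  else f = [::].

Definition inL (F : seq T -> Prop) (w : seq T) : Prop :=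
  forall f, F f -> ~ occurs_periodic f w.

(* (x, y) is an arc with label b of the digraph on A^n:
   x = a s, y = s b, and a s b in W_{n+1}. *)
Definition arcL (F : seq T -> Prop) (n : nat) (x y : n.-tuple T) (b : T) : Prop :=
  exists (a : T) (s : seq T),
    val x = a :: s /\ val y = rcons s b /\ inL F (a :: rcons s b).

Definition arc (F : seq T -> Prop) (n : nat) (x y : n.-tuple T) : Prop :=
  exists b, arcL F x y b.

Definition reach (F : seq T -> Prop) (n : nat) : relation (n.-tuple T) :=
  clos_refl_trans (n.-tuple T) (@arc F n).

Definition is_scc (F : seq T -> Prop) (n : nat) (C : {set n.-tuple T}) : Prop :=
  exists x, forall y, y \in C <-> (reach F x y /\ reach F y x).

Definition is_Gn (F : seq T -> Prop) (n : nat) (C : {set n.-tuple T}) : Prop :=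
  is_scc F C /\ forall C' : {set n.-tuple T}, is_scc F C' -> (#|C'| <= #|C|)%N.

Definition gfun (m u : seq T) : seq T :=
  take (\max_(k < (size m).+1 | suffix (take k m) u) (k : nat))%N m.

(* alpha(u) = m_{|g(u)|+1}, i.e. the letter of m at 0-based index |g(u)|;
   x0 is an irrelevant default (the index is in range when u <> m). *)
Definition alpha (x0 : T) (m u : seq T) : T := nth x0 m (size (gfun m u)).

End DeBruijn.

(* Main.v *)
Require Import Defs.
From HB Require Import structures.
From mathcomp Require Import all_boot all_order.
From Stdlib Require Import Relations.
From mathcomp Require Import zify.
Import Order.TTheory.
Local Open Scope order_scope.

Section H.
Context {d : Order.disp_t} {T : finOrderType d}.

Lemma Kspec (mm w : seq T) : exists K,
  [/\ gfun mm w = take K mm, (K <= size mm)%N, suffix (take K mm) w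
    & forall k, (k <= size mm)%N -> suffix (take k mm) w -> (k <= K)%N].
Proof.
rewrite /gfun.
have P0 : suffix (take (@ord0 (size mm)) mm) w by rewrite /= take0 suffix0s.
rewrite (bigop.bigmax_eq_arg ord0 P0).
case: arg_maxnP => //= i Pi maxi.
exists i; split => //; first by rewrite -ltnS.
move=> k kle sk.
have := maxi (Ordinal (kle : (k < (size mm).+1)%N)) sk; done.
Qed.

Lemma lexlt_le (x0 : T) j (mm : seq T) c r : (j < size mm)%N ->
  lexlt (rcons (take j mm) c ++ r) mm -> c <= nth x0 mm j.
Proof.
elim: j mm => [|j IH] [|a mm] //= hj.
  by case/orP => [/ltW //| /andP[/eqP -> _]].
rewrite ltxx /= eqxx /=; exact: IH.
Qed.


Lemma arc_out (F : seq T -> Prop) n (C : {set n.-tuple T}) x y :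
  is_scc F C -> x \in C -> y \in C -> x != y ->
  exists x' b', x' \in C /\ arcL F x x' b'.
Proof.
case=> r Hr xC yC xy.
have [rx xr] := (Hr x).1 xC.
have [ry yr] := (Hr y).1 yC.
have hxy : reach F x y by apply: rt_trans xr ry.
move: xy yr; case: (clos_rt_rt1n _ _ _ _ hxy) => [|x1 y1 [b' ab] h] xy yr.
  by rewrite eqxx in xy.
exists x1, b'; split => //; apply/(Hr x1); split.
  by apply: rt_trans rx (rt_step _ _ _ _ _); exists b'.
by apply: rt_trans (clos_rt1n_rt _ _ _ _ h) yr.
Qed.

Lemma walk (F : seq T -> Prop) n (C : {set n.-tuple T}) y1 y2 :
  is_scc F C -> y1 \in C -> y2 \in C -> y1 != y2 ->
  forall p x, x \in C -> exists z r, z \in C /\ val z = drop p (val x) ++ r.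
Proof.
move=> sc y1C y2C y12; elim=> [|p IH] x xC.
  by exists x, [::]; rewrite drop0 cats0.
have [z [r [zC ez]]] := IH x xC.
have [z' [b' [z'C [a' [s' [e1 [e2 _]]]]]]] : exists x' b', x' \in C /\ arcL F z x' b'.
  case: (eqVneq z y1) => [->|zy1]; last exact: arc_out sc zC y1C zy1.
  exact: arc_out sc y1C y2C y12.
exists z'; rewrite -addn1 addnC -drop_drop.
case E: (drop p (val x)) => [|c t] /=.
  by exists (val z').

exists (rcons r b'); split => //; rewrite e2.
move: ez; rewrite e1 E /= => -[_ ->]; by rewrite drop0 rcons_cat.
Qed.

Lemma suffix_two (s1 s2 w : seq T) : suffix s1 w -> suffix s2 w ->
  (size s1 <= size s2)%N -> suffix s1 s2.
Proof.
rewrite !suffixE => /eqP e1 /eqP e2 le.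
have h2 : (size s2 <= size w)%N by rewrite -e2 size_drop leq_subr.
move: le h2; set a := size s1; set b := size s2 => le h2.
rewrite -e2 -e1 drop_drop; apply/eqP; congr drop.
have key : forall a b W, (a <= b)%N -> (b <= W)%N -> b - a + (W - b) = W - a by move=> *; lia.
exact: key.
Qed.

Lemma Pkey (x0 : T) (F : seq T -> Prop) n (C : {set n.-tuple T}) (m y1 y2 x : n.-tuple T) :
  is_scc F C -> y1 \in C -> y2 \in C -> y1 != y2 -> m \in C ->
  (forall w, w \in C -> w != m -> lexlt (val w) (val m)) -> x \in C ->
  forall p j c r0, (j < n)%N -> drop p (val x) = rcons (take j (val m)) c ++ r0 ->
  c <= nth x0 (val m) j.
Proof.
move=> sc y1C y2C y12 mC mx xC p j c r0 jn e.
have [z [r [zC ez]]] := walk F n C y1 y2 sc y1C y2C y12 p x xC.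
rewrite e -catA in ez.
have szm : size (val m) = n by rewrite size_tuple.
case: (eqVneq z m) => [zm|zm].
  have jl : (j <= size (val m))%N by rewrite szm ltnW.
  move: ez; rewrite zm => ->.
  rewrite nth_cat size_rcons (size_takel jl) ltnSn nth_rcons (size_takel jl) ltnn eqxx.
  done.
apply: (lexlt_le x0 j (val m) c (r0 ++ r)); first by rewrite szm.
by rewrite -ez; apply: mx.
Qed.
End H.

Theorem lemma3 (d : Order.disp_t) (T : finOrderType d) (F : seq T -> Prop)
  (n : nat) (C : {set n.-tuple T}) (m : n.-tuple T) (x0 : T)
  (u v : n.-tuple T) (b : T) :
  (1 <= n)%N ->
  is_Gn F C ->
  m \in C ->
  (forall w, w \in C -> w != m -> lexlt (val w) (val m)) ->
  u \in C -> v \in C -> arcL F u v b ->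
  u != m -> v != m ->
  [/\ b <= alpha x0 m u,
      b < alpha x0 m u -> gfun m v = [::]
    & b = alpha x0 m u -> gfun m v = rcons (gfun m u) b].
Proof.
move=> n1 [sc _] mC mx uC vC [a [s [eu [ev _]]]] um vm.
have um' : u != m by [].
have PK := Pkey x0 F n C m u m _ sc uC mC um mC mx.
set mm := val m in PK mx *.
have szm : size mm = n by rewrite size_tuple.
have szu : size (val u) = n by rewrite size_tuple.
have szv : size (val v) = n by rewrite size_tuple.
have szs : size s = n.-1 by rewrite -szu eu.
have [K [gu Kle sK Kmax]] := Kspec mm (val u).
have Kn : (K < n)%N.
  rewrite ltn_neqAle -szm Kle andbT; apply/negP => /eqP KE.
  move: sK; rewrite KE take_size suffixE szu szm subnn drop0 => /eqP uE.
  by move: um; rewrite -(inj_eq val_inj) uE eqxx.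
have alu : alpha x0 m u = nth x0 mm K.
  by rewrite /alpha gu size_takel.
rewrite alu.
have sKs : suffix (take K mm) s.
  move: sK => /suffixP[w e]; move: e; rewrite eu.
  case: w => [|a' w'] /= e.
    by move/(f_equal size): e; rewrite size_takel //= szs; lia.
  by case: e => _ ->; apply: suffix_suffix.
have svb : suffix (rcons (take K mm) b) (val v) by rewrite ev suffix_rcons eqxx.
have bound : forall k, (k < n)%N -> suffix (take k.+1 mm) (val v) ->
    [/\ (k <= K)%N, nth x0 mm k = b & suffix (take k mm) (val u)].
  move=> k kn; rewrite (take_nth x0) ?szm // ev suffix_rcons => /andP[/eqP eb sks].
  have sku : suffix (take k mm) (val u) by rewrite eu; apply: suffix_trans sks (suffix_cons _ _).
  split => //; apply: Kmax => //; rewrite szm; lia.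
have b_le : b <= nth x0 mm K.
  move: svb => /suffixP[w e].
  apply: (PK v vC (size w) K b [::] Kn).
  by rewrite e drop_size_cat // cats0.
split => //.
  move=> blt.
  have [K' [gv K'le sK' K'max]] := Kspec mm (val v).
  rewrite gv; case: K' K'le sK' {K'max gv} => [|L] K'le sK'; first by rewrite take0.
  have [LK nb sLu] := bound L (leq_trans K'le (eq_leq szm)) sK'.
  have [LltK|LgeK] := ltnP L K; last first.
    have LK' : L = K by apply/eqP; rewrite eqn_leq LK LgeK.
    by rewrite LK' in nb; rewrite nb ltxx in blt.
    have hL : (L <= size mm)%N by rewrite szm; apply: ltnW; apply: leq_trans LltK (ltnW Kn).
    have hK : (K <= size mm)%N by rewrite szm; apply: ltnW.
    have st : suffix (take L mm) (take K mm).
      apply: (suffix_two _ _ (val u)) => //.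
      by rewrite (size_takel hL) (size_takel hK) ltnW.
    move: st => /suffixP[w' ew].
    have szw : size w' = K - L.
      move/(f_equal size): ew; rewrite size_cat (size_takel hL) (size_takel hK) => ->.
      by rewrite addnK.
    have edrop : drop (K - L) mm = rcons (take L mm) (nth x0 mm K) ++ drop K.+1 mm.
      rewrite -{1}(cat_take_drop K mm) ew -catA -szw drop_size_cat //.
      by rewrite (drop_nth x0) ?szm // cat_rcons.
    have Ln : (L < n)%N by apply: leq_trans LltK (ltnW Kn).
    have := PK m mC (K - L) L (nth x0 mm K) _ Ln edrop.
    rewrite nb => h.
    by rewrite (lt_geF blt) in h.
move=> bE.
have [K' [gv K'le sK' K'max]] := Kspec mm (val v).
have e1 : take K.+1 mm = rcons (take K mm) b by rewrite (take_nth x0) ?szm // bE.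
have K'ge : (K.+1 <= K')%N by apply: K'max; [rewrite szm | rewrite e1].
case: K' K'le sK' K'max gv K'ge => [//|L] K'le sK' _ gv K'ge.
have [LK _ _] := bound L (leq_trans K'le (eq_leq szm)) sK'.
have LK2 : L = K by apply/eqP; rewrite eqn_leq LK.
by rewrite gv LK2 gu e1.
Qed.
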